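(* The following single-statistic generating functions hold over $S_n(123,132)$: $$\sum_{n\ge0}\sum_{\pi\in S_n(123,132)}x^np^{\operatorname{asc}(\pi)}=\frac{1-x}{1-2x+x^2-px^2},\qquad \sum_{n\ge0}\sum_{\pi\in S_n(123,132)}x^nq^{\operatorname{des}(\pi)}=\frac{1+x-2qx+x^2-2qx^2+q^2x^2}{1-2qx-qx^2+q^2x^2},$$ $$\sum_{n\ge0}\sum_{\pi\in S_n(123,132)}x^ny^{\operatorname{MNA}(\pi)}=\frac{1-x}{1-2x+x^2-x^2y},\qquad \sum_{n\ge0}\sum_{\pi\in S_n(123,132)}x^nz^{\operatorname{MND}(\pi)}=\frac{1+x+x^2-2x^2z-x^3z}{1-3x^2z-2x^3z}.$$
   Context: For $n\ge 0$, $S_n$ denotes the set of permutations $\pi=\pi_1\pi_2\cdots\pi_n$ of $[n]=\{1,\dots,n\}$ ($S_0$ consists of the empty permutation, for which all statistics below are $0$). $S_n(123,132)$ is the set of $\pi\in S_n$ containing no subsequence order-isomorphic to $123$ or to $132$. $\operatorname{asc}(\pi)$ (resp. $\operatorname{des}(\pi)$) is the number of $i\in[n-1]$ with $\pi_i<\pi_{i+1}$ (resp. $\pi_i>\pi_{i+1}$). $\operatorname{MNA}(\pi)$ is the maximum size of a set $I\subseteq[n-1]$ such that $\pi_i<\pi_{i+1}$ for all $i\in I$ and $|i-j|\ge 2$ for distinct $i,j\in I$; $\operatorname{MND}(\pi)$ is defined analogously with $\pi_i>\pi_{i+1}$. *)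

(* Defs.v *)
From mathcomp Require Import all_boot all_order all_algebra all_fingroup.
Set Implicit Arguments. Unset Strict Implicit. Unset Printing Implicit Defensive.
Import GRing.Theory.
Local Open Scope ring_scope.

(* One-line notation of a permutation s of 'I_n, values in {0,...,n-1}
   (order-isomorphic to the usual 1..n convention). *)
Definition oneline n (s : 'S_n) : seq nat := [seq val (s i) | i <- enum 'I_n].

Definition contains123 (w : seq nat) : bool :=
  [exists i : 'I_(size w), exists j : 'I_(size w), exists k : 'I_(size w),
     [&& (i < j)%N, (j < k)%N, (nth 0 w i < nth 0 w j)%N & (nth 0 w j < nth 0 w k)%N]].
Definition contains132 (w : seq nat) : bool :=
  [exists i : 'I_(size w), exists j : 'I_(size w), exists k : 'I_(size w),
     [&& (i < j)%N, (j < k)%N, (nth 0 w i < nth 0 w k)%N & (nth 0 w k < nth 0 w j)%N]].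

Definition Av123_132 n : {set 'S_n} :=
  [set s : 'S_n | ~~ contains123 (oneline s) && ~~ contains132 (oneline s)].

Definition is_asc (w : seq nat) (i : nat) : bool :=
  (i.+1 < size w)%N && (nth 0 w i < nth 0 w i.+1)%N.
Definition is_des (w : seq nat) (i : nat) : bool :=
  (i.+1 < size w)%N && (nth 0 w i.+1 < nth 0 w i)%N.

Definition asc (w : seq nat) : nat := #|[set i : 'I_(size w) | is_asc w i]|.
Definition des (w : seq nat) : nat := #|[set i : 'I_(size w) | is_des w i]|.

Definition nonadj_in (w : seq nat) (P : seq nat -> nat -> bool)
  (I : {set 'I_(size w)}) : bool :=
  [forall i in I, P w i] &&
  [forall i in I, forall j in I, (i != j) ==> ((i.+1 < j) || (j.+1 < i))%N].

Definition MNA (w : seq nat) : nat :=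
  \max_(I : {set 'I_(size w)} | nonadj_in is_asc I) #|I|.
Definition MND (w : seq nat) : nat :=
  \max_(I : {set 'I_(size w)} | nonadj_in is_des I) #|I|.

Definition gf_coef (stat : seq nat -> nat) (n : nat) : {poly int} :=
  \sum_(s in Av123_132 n) 'X ^+ stat (oneline s).

(* The formal power series sum_n a n x^n (over R) equals N(x)/D(x), where
   D has constant term 1: i.e. (sum_n a n x^n) * D(x) = N(x) in R[[x]]. *)
Definition fps_is_ratio (R : nzRingType) (a : nat -> R) (N D : {poly R}) : Prop :=
  D`_0 = 1 /\ forall m, \sum_(k < m.+1) D`_k * a (m - k)%N = N`_m.

(* Main.v *)
Require Import Defs.
From mathcomp Require Import all_boot all_order all_algebra all_fingroup.
From mathcomp Require Import zify ring.
Import GRing.Theory.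


Fixpoint gs (prev : bool) (b : seq bool) : nat :=
  if b is x :: b' then (x && ~~ prev) + gs (x && ~~ prev) b' else 0.

Fixpoint chosen (p : nat -> bool) (i : nat) : bool :=
  if i is i'.+1 then p i'.+1 && ~~ chosen p i' else p 0.

Lemma gs_chosen p n a :
  gs (if a is a'.+1 then chosen p a' else false) (map p (iota a n)) =
  \sum_(i < n) chosen p (a + i).
Proof.
elim: n a => [|n IH] a; first by rewrite big_ord0.
rewrite big_ord_recl /= addn0.
have -> : p a && ~~ (if a is a'.+1 then chosen p a' else false) = chosen p a.
  by case: a {IH}=> [|a] //=; rewrite andbT.
move: (IH a.+1) => /= ->; congr (_ + _); apply: eq_bigr => i _.
by rewrite /bump /= addSn addnS.
Qed.

Lemma sum_nat_bool_le (S : nat -> bool) (p : nat -> bool) :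
  (forall i, S i -> p i) -> (forall i, S i -> S i.+1 -> False) ->
  forall m, \sum_(i < m) S i <= \sum_(i < m) chosen p i.
Proof.
move=> HSp HSS.
have key : forall m, (\sum_(i < m) S i <= \sum_(i < m) chosen p i) /\
                     (\sum_(i < m.+1) S i <= \sum_(i < m.+1) chosen p i).
  elim=> [|m [IH1 IH2]].
    split; first by rewrite !big_ord0.
    rewrite !big_ord1 /=; case E: (S 0) => //; by rewrite (HSp _ E).
  split=> //.
  move: IH1 IH2; rewrite !big_ord_recr /=.
  case E: (S m.+1); last by rewrite addn0 => _ IH2; apply: leq_trans IH2 (leq_addr _ _).
  have Em : S m = false by case E2: (S m) => //; case: (HSS _ E2 E).
  have pm : p m.+1 by apply: HSp.
  rewrite Em pm addn0 => IH1 _.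
  rewrite -!addnA; apply: leq_add => //.
  by case: (chosen p m).
by move=> m; case: (key m).
Qed.

Lemma card_set_sum N (q : nat -> bool) :
  #|[set i : 'I_N | q i]| = \sum_(i < N) q i.
Proof.
rewrite -sum1_card big_mkcond /=; apply: eq_bigr => i _; rewrite inE.
by case: (q i).
Qed.

Lemma MN_gs N (p : nat -> bool) :
  \max_(I : {set 'I_N} | [forall i in I, p i] &&
      [forall i in I, forall j in I, (i != j) ==> ((i.+1 < j) || (j.+1 < i))%N]) #|I|
  = gs false (map p (iota 0 N)).
Proof.
rewrite (gs_chosen p N 0); apply/eqP; rewrite eqn_leq; apply/andP; split.
  apply/bigmax_leqP => I /andP[/forall_inP HP /forall_inP HD].
  pose S i := if (insub i : option 'I_N) is Some j then j \in I else false.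
  have -> : #|I| = \sum_(i < N) S i.
    rewrite -sum1_card big_mkcond /=; apply: eq_bigr => i _.
    by rewrite /S valK; case: (i \in I).
  apply: sum_nat_bool_le.
    move=> i; rewrite /S; case: insubP => // j _ <- jI; exact: HP.
  move=> i; rewrite /S; case: insubP => // j _ <- jI.
  case: insubP => // j' _ Ej' j'I.
  have Ej2 : nat_of_ord j' = (nat_of_ord j).+1 := Ej'.
  have nj : j != j'.
    by apply/negP => /eqP Ejj; move: Ej2; rewrite -Ejj; lia.
  have := HD _ jI => /forall_inP /(_ _ j'I) /implyP /(_ nj).
  rewrite Ej2; lia.
apply: (@leq_trans #|[set i : 'I_N | chosen p i]|); first by rewrite card_set_sum.
apply: leq_bigmax_cond; apply/andP; split.
  apply/forall_inP => i; rewrite inE; case: (nat_of_ord i) => [|k] //=.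
  by case/andP.
apply/forall_inP => i; rewrite inE => ci; apply/forall_inP => j; rewrite inE => cj.
apply/implyP => nij.
have ne : nat_of_ord i != nat_of_ord j by apply: contra nij => /eqP E; apply/eqP/val_inj.
have h1 : nat_of_ord j != (nat_of_ord i).+1.
  by apply/negP => /eqP E; move: cj; rewrite E /= ci andbF.
have h2 : nat_of_ord i != (nat_of_ord j).+1.
  by apply/negP => /eqP E; move: ci; rewrite E /= cj andbF.
move: ne h1 h2; lia.
Qed.

Definition cmpP (R : nat -> nat -> bool) (w : seq nat) (i : nat) : bool :=
  (i.+1 < size w) && R (nth 0 w i) (nth 0 w i.+1).
Definition Rasc (x y : nat) : bool := x < y.
Definition Rdes (x y : nat) : bool := y < x.
Definition bits R (w : seq nat) : seq bool := map (cmpP R w) (iota 0 (size w)).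

Lemma bits_nil R : bits R [::] = [::]. Proof. by []. Qed.

Lemma bits_cons R m s :
  bits R (m :: s) = (if s is y :: _ then R m y else false) :: bits R s.
Proof.
rewrite /bits /= /cmpP /=; congr (_ :: _); first by case: s.
rewrite -(addn0 1) iotaDl -map_comp; apply: eq_map => i /=.
by rewrite /cmpP /= add1n.
Qed.

Lemma sum_count (p : nat -> bool) N : \sum_(i < N) p i = count p (iota 0 N).
Proof.
elim: N => [|N IH]; first by rewrite big_ord0.
rewrite big_ord_recr IH; have -> : iota 0 N.+1 = iota 0 (N + 1) by rewrite addn1.
by rewrite iotaD count_cat /= addn0.
Qed.

Lemma asc_bits w : asc w = count id (bits Rasc w).
Proof.
by rewrite /asc card_set_sum sum_count /bits count_map.
Qed.

Lemma des_bits w : des w = count id (bits Rdes w).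
Proof.
by rewrite /des card_set_sum sum_count /bits count_map.
Qed.

Lemma MNA_bits w : MNA w = gs false (bits Rasc w).
Proof. by rewrite /MNA /nonadj_in MN_gs. Qed.

Lemma MND_bits w : MND w = gs false (bits Rdes w).
Proof. by rewrite /MND /nonadj_in MN_gs. Qed.

Lemma rev_iotaS a k : rev (iota a k.+1) = (a + k) :: rev (iota a k).
Proof. by rewrite -(addn1 k) iotaD rev_cat. Qed.

Lemma bits_blk R a k m s c d :
  (forall i, i < k -> R (a + i).+1 (a + i) = c) -> R a m = d ->
  bits R (rev (iota a k.+1) ++ m :: s) = nseq k c ++ d :: bits R (m :: s).
Proof.
move=> Hc Hd; elim: k Hc => [|k IH] Hc.
  by rewrite /= bits_cons Hd.
rewrite rev_iotaS rev_iotaS /= bits_cons.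
have -> : a + k :: rev (iota a k) ++ m :: s = rev (iota a k.+1) ++ m :: s.
  by rewrite rev_iotaS.
rewrite IH; last by move=> i ik; apply: Hc; lia.
by rewrite addnS Hc.
Qed.

Lemma gs_nseqF j b : gs false (nseq j false ++ b) = gs false b.
Proof. by elim: j. Qed.

Lemma gs_ones prev j b :
  gs prev (nseq j true ++ false :: b) = (if prev then j./2 else uphalf j) + gs false b.
Proof.
elim: j prev => [|j IH] prev; first by case: prev.
by case: prev; rewrite /= IH //= add0n.
Qed.

Lemma hd_asc a k s : all (fun y => y < a) s ->
  (if s is y :: _ then Rasc (a + k) y else false) = false.
Proof. case: s => //= y s /andP[ya _]; rewrite /Rasc; lia. Qed.

Lemma hd_des a k s : all (fun y => y < a) s ->
  (if s is y :: _ then Rdes (a + k) y else false) = (s != [::]).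
Proof. case: s => //= y s /andP[ya _]; rewrite /Rdes; lia. Qed.

Lemma bits_asc_blk a k s : all (fun y => y < a) s ->
  bits Rasc (rev (iota a k) ++ (a + k) :: s) =
  (if k is k'.+1 then nseq k' false ++ [:: true] else [::]) ++ false :: bits Rasc s.
Proof.
move=> Hs; case: k => [|k].
  by rewrite /= bits_cons hd_asc.
rewrite (@bits_blk _ _ _ _ _ false true).
- by rewrite bits_cons hd_asc // -catA.
- by move=> i _; rewrite /Rasc; lia.
- by rewrite /Rasc; lia.
Qed.

Lemma bits_des_blk a k s : all (fun y => y < a) s ->
  bits Rdes (rev (iota a k) ++ (a + k) :: s) =
  (if k is k'.+1 then nseq k' true ++ [:: false] else [::]) ++ (s != [::]) :: bits Rdes s.
Proof.
move=> Hs; case: k => [|k].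
  by rewrite /= bits_cons hd_des.
rewrite (@bits_blk _ _ _ _ _ true false).
- by rewrite bits_cons hd_des // -catA.
- by move=> i _; rewrite /Rdes; lia.
- by rewrite /Rdes; lia.
Qed.

Lemma asc_blk a k s : all (fun y => y < a) s ->
  asc (rev (iota a k) ++ (a + k) :: s) = (0 < k) + asc s.
Proof.
move=> Hs; rewrite !asc_bits bits_asc_blk //; case: k => [|k] //=.
rewrite !count_cat count_nseq /=; lia.
Qed.

Lemma des_blk a k s : all (fun y => y < a) s ->
  des (rev (iota a k) ++ (a + k) :: s) = k.-1 + (s != [::]) + des s.
Proof.
move=> Hs; rewrite !des_bits bits_des_blk //; case: k => [|k] //=.
rewrite !count_cat count_nseq /= mul1n; lia.
Qed.

Lemma MNA_blk a k s : all (fun y => y < a) s ->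
  MNA (rev (iota a k) ++ (a + k) :: s) = (0 < k) + MNA s.
Proof.
move=> Hs; rewrite !MNA_bits bits_asc_blk //; case: k => [|k] //=.
by rewrite -catA gs_nseqF.
Qed.

Definition qst (w : seq nat) := gs false (true :: bits Rdes w).
Definition rst (w : seq nat) := gs false ((w != [::]) :: bits Rdes w).

Lemma MND_blk a k s : all (fun y => y < a) s ->
  MND (rev (iota a k) ++ (a + k) :: s) = k./2 + rst s.
Proof.
move=> Hs; rewrite !MND_bits bits_des_blk //; case: k => [|k] //=.
by rewrite -catA /= gs_ones.
Qed.

Lemma qst_blk a k s : all (fun y => y < a) s ->
  qst (rev (iota a k) ++ (a + k) :: s) =
  if k == 0 then (MND s).+1 else uphalf k + rst s.
Proof.
move=> Hs; rewrite /qst MND_bits bits_des_blk //; case: k => [|k] //=.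
  by case: (s != [::]).
rewrite -catA /= gs_ones /rst /= !andbT; lia.
Qed.

Lemma rst_cons w : w != [::] -> rst w = qst w.
Proof. by move=> /negPf; rewrite /rst /qst => ->. Qed.

Fixpoint Wf (fuel n : nat) : seq (seq nat) :=
  if fuel is f.+1 then
    (if n is n'.+1 then
       [seq rev (iota (n' - k) k) ++ n' :: s | k <- iota 0 n, s <- Wf f (n' - k)]
     else [:: [::]])
  else [:: [::]].

Definition W n := Wf n n.

Lemma Wf_stable f f' n : n <= f -> n <= f' -> Wf f n = Wf f' n.
Proof.
elim: f f' n => [|f IH] f' n.
  by case: n => // _; case: f'.
case: n => [|n] Hf; first by case: f'.
case: f' => [|f'] // Hf'; cbn [Wf].
apply: eq_allpairsr => k; apply: IH; lia.
Qed.

Lemma W0 : W 0 = [:: [::]]. Proof. by []. Qed.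

Lemma WS n : W n.+1 =
  [seq rev (iota (n - k) k) ++ n :: s | k <- iota 0 n.+1, s <- W (n - k)].
Proof.
rewrite {1}/W; cbn [Wf]; apply: eq_allpairsr => k; apply: Wf_stable; lia.
Qed.

Lemma sum_WS (R : Type) (idx : R) (op : Monoid.com_law idx) n (F : seq nat -> R) :
  \big[op/idx]_(w <- W n.+1) F w =
  \big[op/idx]_(k < n.+1) \big[op/idx]_(s <- W (n - k)) F (rev (iota (n - k) k) ++ n :: s).
Proof.
by rewrite WS big_allpairs_dep /= -(big_mkord xpredT (fun k => \big[op/idx]_(s <- W (n - k)) F (rev (iota (n - k) k) ++ n :: s))).
Qed.

Lemma W_perm n w : w \in W n -> perm_eq w (iota 0 n).
Proof.
elim/ltn_ind: n w => [[|n]] IH w.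
  by rewrite W0 inE => /eqP ->.
rewrite WS => /allpairsPdep [k [s [kin sin ->]]].
move: kin; rewrite mem_iota add0n => /andP[_ kn].
have Hs := IH (n - k) (leq_ltn_trans (leq_subr k n) (ltnSn n)) s sin.
have E : iota 0 n.+1 = (iota 0 (n - k) ++ iota (n - k) k) ++ [:: n].
  by rewrite -iotaD subnK; [rewrite -addn1 iotaD add0n | rewrite -ltnS].
rewrite E perm_sym perm_catC /= perm_sym.
rewrite -cat1s perm_catCA /= perm_cons perm_catC.
by apply: perm_cat => //; rewrite perm_rev.
Qed.

Lemma W_all n w : w \in W n -> all (fun y => y < n) w.
Proof.
move=> /W_perm P; rewrite (perm_all _ P); apply/allP => y; rewrite mem_iota; lia.
Qed.

Lemma W_size n w : w \in W n -> size w = n.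
Proof. by move=> /W_perm /perm_size ->; rewrite size_iota. Qed.

Fixpoint good (w : seq nat) : bool :=
  if w is a :: w' then (count (fun b => a < b) w' <= 1) && good w' else true.

Lemma good_catr u v : good (u ++ v) -> good v.
Proof. by elim: u => //= x u IH /andP[_ /IH]. Qed.

Lemma cnt0 m s : all (fun y => y < m) s -> count (fun b => m < b) s = 0.
Proof. by elim: s => //= y s IH /andP[ym /IH ->]; rewrite addn0; case: ltnP ym => //; lia. Qed.

Definition gtn' : rel nat := fun x y => y < x.

Lemma gtn'_trans : transitive gtn'.
Proof. by move=> x y z; rewrite /gtn'; lia. Qed.

Lemma good_blk p m s :
  sorted gtn' p -> all (fun y => y < m) p -> (forall x, x \in p -> all (fun y => y < x) s) ->
  all (fun y => y < m) s -> good s -> good (p ++ m :: s).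
Proof.
elim: p => [|x p IH] /=.
  by move=> _ _ _ Hs ->; rewrite cnt0.
move=> Hp /andP[xm Hpm] Hps Hs Hg.
have Hp' := path_sorted Hp.
rewrite IH //; last by move=> y yp; apply: Hps; rewrite inE yp orbT.
have Hx : all (gtn' x) p by rewrite (path_sortedE gtn'_trans) in Hp; case/andP: Hp.
rewrite count_cat /= xm cnt0 ?cnt0 //.
by apply: Hps; rewrite inE eqxx.
Qed.

Lemma count2 (a : pred nat) s y z : uniq s -> y \in s -> z \in s -> y != z -> a y -> a z ->
  1 < count a s.
Proof.
move=> Us ys zs yz ay az.
rewrite ((seq.permP (perm_to_rem ys)) a) /= ay add1n ltnS -has_count.
apply/hasP; exists z => //; rewrite (mem_rem_uniq _ Us) inE zs andbT eq_sym //.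
Qed.

Lemma good_struct p m s :
  good (p ++ m :: s) -> uniq (p ++ m :: s) -> all (fun y => y < m) (p ++ s) ->
  sorted gtn' p /\ (forall x, x \in p -> all (fun y => y < x) s).
Proof.
elim: p => [|x p IH] /=; first by [].
move=> /andP[Hc Hg] /andP[xn Hu] /andP[xm Ha].
have [Hsp Hps] := IH Hg Hu Ha.
have Hlt : forall y, y \in p ++ s -> y < x.
  move=> y yin; case: (ltngtP y x) => // [xy|yx].
    suff H2 : 1 < count (fun b => x < b) (p ++ m :: s) by rewrite leqNgt H2 in Hc.
    apply: (@count2 _ _ y m Hu).
    - by move: yin; rewrite !mem_cat inE => /orP[->|->]; rewrite ?orbT.
    - by rewrite mem_cat inE eqxx orbT.
    - by have := allP Ha y yin; rewrite neq_ltn => ->.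
    - by [].
    - by [].
  by move: xn; rewrite -yx mem_cat inE; move: yin; rewrite mem_cat => /orP[->|->]; rewrite ?orbT.
split.
  rewrite (path_sortedE gtn'_trans) Hsp andbT; apply/allP => y yp.
  by rewrite /gtn' Hlt // mem_cat yp.
move=> x'; rewrite inE => /orP[/eqP ->|x'p]; last by apply: Hps.
by apply/allP => y ys; rewrite Hlt // mem_cat ys orbT.
Qed.

Lemma rev_iota_sorted a k : sorted gtn' (rev (iota a k)).
Proof. by rewrite rev_sorted; apply: iota_ltn_sorted. Qed.

Lemma W_good n w : w \in W n -> good w.
Proof.
elim/ltn_ind: n w => [[|n]] IH w.
  by rewrite W0 inE => /eqP ->.
rewrite WS => /allpairsPdep [k [s [kin sin ->]]].
move: kin; rewrite mem_iota add0n => /andP[_ kn].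
have Hs := IH (n - k) (leq_ltn_trans (leq_subr k n) (ltnSn n)) s sin.
have Ha := W_all _ _ sin.
apply: good_blk => //.
- exact: rev_iota_sorted.
- by apply/allP => x; rewrite mem_rev mem_iota; lia.
- move=> x; rewrite mem_rev mem_iota => /andP[Hx _]; apply/allP => y ys.
  by have := allP Ha y ys; lia.
- by apply/allP => y ys; have := allP Ha y ys; lia.
Qed.

Lemma decomp n w : perm_eq w (iota 0 n.+1) -> good w ->
  exists k s, [/\ k <= n, w = rev (iota (n - k) k) ++ n :: s,
                  perm_eq s (iota 0 (n - k)) & good s].
Proof.
move=> P G.
have nw : n \in w by rewrite (perm_mem P) mem_iota; lia.
have Uw : uniq w by rewrite (perm_uniq P) iota_uniq.
have Sw : size w = n.+1 by rewrite (perm_size P) size_iota.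
set k := index n w.
have kw : k < size w by rewrite index_mem.
set p := take k w; set s := drop k.+1 w.
have Ew : w = p ++ n :: s.
  by rewrite -{1}(cat_take_drop k w) (drop_nth 0 kw) nth_index.
have Sp : size p = k by rewrite size_take kw.
clearbody p s; clearbody k.
have Pw : perm_eq w (n :: (p ++ s)) by rewrite Ew -cat1s perm_catCA.
have U2 : uniq (n :: (p ++ s)) by rewrite -(perm_uniq Pw).
have Ha : all (fun y => y < n) (p ++ s).
  apply/allP => y yin.
  have : y \in w by rewrite (perm_mem Pw) inE yin orbT.
  rewrite (perm_mem P) mem_iota => /andP[_ yn].
  have : y != n by apply/negP => /eqP E; move: U2; rewrite /= -E yin.
  lia.
have G' : good (p ++ n :: s) by rewrite -Ew.
have U' : uniq (p ++ n :: s) by rewrite -Ew.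
have [Hsp Hps] := @good_struct p n s G' U' Ha.
have Ps : perm_eq (p ++ s) (iota 0 n).
  have : perm_eq (n :: (p ++ s)) (n :: iota 0 n).
    have P2 : perm_eq (n :: (p ++ s)) (iota 0 n.+1).
      by apply: perm_trans P; rewrite perm_sym.
    apply: perm_trans P2 _.
    by rewrite -addn1 iotaD add0n cats1 perm_rcons.
  by rewrite perm_cons.
have [Up Us] : uniq p /\ uniq s.
  by move: U2 => /= /andP[_]; rewrite cat_uniq => /and3P[-> _ ->].
have Ss : size s = n - k.
  by have := perm_size Ps; rewrite size_cat size_iota Sp => <-; rewrite addKn.
have kn : k <= n by rewrite -ltnS -Sw.
have sub_s : {subset s <= iota 0 (n - k)}.
  move=> y ys.
  have yn : y < n by apply: (allP Ha); rewrite mem_cat ys orbT.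
  have sub : {subset p <= iota y.+1 (n - y.+1)}.
    move=> x xp; have := allP (Hps x xp) y ys => yx.
    have xn : x < n by apply: (allP Ha); rewrite mem_cat xp.
    rewrite mem_iota; clear - yx xn; lia.
  have := uniq_leq_size Up sub; rewrite size_iota Sp => H.
  rewrite mem_iota; clear - H yn kn; lia.
have Ps_eq : perm_eq s (iota 0 (n - k)).
  apply: uniq_perm => //; first exact: iota_uniq.
  by apply: (uniq_min_size Us sub_s _).2; rewrite size_iota Ss.
have sub_p : {subset p <= iota (n - k) k}.
  move=> x xp.
  have xn : x < n by apply: (allP Ha); rewrite mem_cat xp.
  have sub : {subset s <= iota 0 x}.
    by move=> y ys; have := allP (Hps x xp) y ys; rewrite mem_iota.
  have := uniq_leq_size Us sub; rewrite size_iota Ss => H.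
  rewrite mem_iota; clear - H xn kn; lia.
have Ep : p = rev (iota (n - k) k).
  apply: (irr_sorted_eq gtn'_trans) => //.
  - by move=> x; rewrite /gtn' ltnn.
  - exact: rev_iota_sorted.
  - move=> x; rewrite mem_rev.
    by apply: (uniq_min_size Up sub_p _).2; rewrite size_iota Sp.
exists k, s; split => //; first by rewrite Ew Ep.
by move: G; rewrite Ew => /good_catr /= /andP[].
Qed.

Lemma W_complete n w : perm_eq w (iota 0 n) -> good w -> w \in W n.
Proof.
elim/ltn_ind: n w => [[|n]] IH w P G.
  by move: (perm_size P); rewrite size_iota => /size0nil ->.
have [k [s [kn -> Ps Gs]]] := decomp _ _ P G.
rewrite WS; apply/allpairsPdep; exists k, s; split => //.
  by rewrite mem_iota; lia.
by apply: IH => //; lia.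
Qed.

Lemma index_blk n k s : k <= n -> index n (rev (iota (n - k) k) ++ n :: s) = k.
Proof.
move=> kn; rewrite index_cat.
have -> : (n \in rev (iota (n - k) k)) = false.
  by rewrite mem_rev mem_iota; apply/negP => /andP[_]; rewrite subnK // ltnn.
by rewrite size_rev size_iota /= eqxx addn0.
Qed.

Lemma W_uniq n : uniq (W n).
Proof.
elim/ltn_ind: n => [[|n]] IH; first by [].
rewrite WS; apply: allpairs_uniq_dep.
- exact: iota_uniq.
- by move=> k _; apply: IH; rewrite ltnS leq_subr.
move=> [k1 s1] [k2 s2] /allpairsPdep [k1' [s1' [k1in _ [E1 E1']]]]
  /allpairsPdep [k2' [s2' [k2in _ [E2 E2']]]] /= E.
subst k1' k2'.
have k1n : k1 <= n by move: k1in; rewrite mem_iota ltnS.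
have k2n : k2 <= n by move: k2in; rewrite mem_iota ltnS.
have Ek : k1 = k2 by rewrite -(index_blk _ _ s1 k1n) E index_blk.
subst k2; move/eqP: E; rewrite eqseq_cat // => /andP[_ /eqP [->]].
by [].
Qed.

Definition badP (w : seq nat) := exists i j k,
  [/\ i < j, j < k, k < size w, nth 0 w i < nth 0 w j & nth 0 w i < nth 0 w k].

Lemma count2P (p : pred nat) s :
  (1 < count p s) <-> exists j k, [/\ j < k, k < size s, p (nth 0 s j) & p (nth 0 s k)].
Proof.
elim: s => [|x s IH] /=.
  by split => // [[j [k [_ ]]]].
split.
  case px: (p x) => /= H.
    have : has p s by rewrite has_count; move: H; rewrite add1n ltnS.
    move=> /hasP [y ys py].
    exists 0, (index y s).+1; split => //; first by rewrite ltnS index_mem.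
    by rewrite /= nth_index.
  have [j [k [jk ks pj pk]]] := (proj1 IH) H.
  by exists j.+1, k.+1.
move=> [j [k [jk ks pj pk]]].
case: k jk ks pk => [|k] //= jk ks pk.
case: j jk pj => [|j] /= jk pj.
  have : has p s by apply/hasP; exists (nth 0 s k) => //; apply: mem_nth.
  by rewrite has_count pj; case: (count p s).
have : 1 < count p s by apply: (proj2 IH); exists j, k.
by move=> H; apply: leq_trans H (leq_addl _ _).
Qed.

Lemma badP_cons a w : badP (a :: w) <->
  (exists j k, [/\ j < k, k < size w, a < nth 0 w j & a < nth 0 w k]) \/ badP w.
Proof.
split.
  move=> [i [j [k [ij jk ks Hj Hk]]]].
  case: k jk ks Hk => [|k] //= jk ks Hk.
  case: j ij jk Hj => [|j] //= ij jk Hj.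
  case: i ij Hj Hk => [|i] /= ij Hj Hk.
    by left; exists j, k.
  by right; exists i, j, k.
move=> [[j [k [jk ks Hj Hk]]] | [i [j [k [ij jk ks Hj Hk]]]]].
  by exists 0, j.+1, k.+1.
by exists i.+1, j.+1, k.+1.
Qed.

Lemma good_badP w : ~~ good w <-> badP w.
Proof.
elim: w => [|a w IH] /=.
  by split => // [[i [j [k [_ _ ]]]]].
rewrite negb_and -ltnNge; split.
  move=> /orP [/count2P H | /IH H]; apply/badP_cons; [by left | by right].
move=> /badP_cons [H | /IH ->]; last by rewrite orbT.
by apply/orP; left; apply/count2P.
Qed.

Lemma contains_badP w : uniq w -> (contains123 w || contains132 w) <-> badP w.
Proof.
move=> Uw; split.
  move=> /orP [/existsP [i /existsP [j /existsP [k /and4P [ij jk Hij Hjk]]]]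
              | /existsP [i /existsP [j /existsP [k /and4P [ij jk Hik Hkj]]]]].
    exists i, j, k; split; [exact ij | exact jk | exact: ltn_ord | exact Hij | exact: ltn_trans Hjk].
  exists i, j, k; split; [exact ij | exact jk | exact: ltn_ord | exact: ltn_trans Hkj | exact Hik].
move=> [i [j [k [ij jk ks Hj Hk]]]].
have js : j < size w by apply: ltn_trans ks.
have iw : i < size w by apply: ltn_trans js.
have ne : nth 0 w j != nth 0 w k.
  by rewrite nth_uniq // neq_ltn jk.
case: (ltngtP (nth 0 w j) (nth 0 w k)) => [jk'|kj'|E]; last by rewrite E eqxx in ne.
  apply/orP; left; apply/existsP; exists (Ordinal iw); apply/existsP; exists (Ordinal js).
  by apply/existsP; exists (Ordinal ks); apply/and4P.
apply/orP; right; apply/existsP; exists (Ordinal iw); apply/existsP; exists (Ordinal js).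
by apply/existsP; exists (Ordinal ks); apply/and4P.
Qed.

Lemma contains_good w : uniq w -> (~~ contains123 w && ~~ contains132 w) = good w.
Proof.
move=> Uw; rewrite -negb_or; apply/idP/idP.
  move=> H; apply/negPn/negP => /good_badP /(contains_badP _ Uw).2 H'.
  by rewrite H' in H.
move=> G; apply/negP => /(contains_badP _ Uw).1 /good_badP; rewrite G.
by [].
Qed.

Lemma oneline_inj n : injective (@oneline n).
Proof.
move=> s1 s2; rewrite /oneline => /eq_in_map E.
apply/permP => i; apply: val_inj; apply: E; by rewrite mem_enum.
Qed.

Lemma oneline_perm n (s : 'S_n) : perm_eq (oneline s) (iota 0 n).
Proof.
have U : uniq (oneline s).
  rewrite /oneline map_inj_uniq ?enum_uniq //.
  by move=> i j /val_inj /perm_inj.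
apply: uniq_perm => //; first exact: iota_uniq.
apply: (uniq_min_size U _ _).2.
  by move=> y /mapP [i _ ->]; rewrite mem_iota /= add0n ltn_ord.
by rewrite size_iota /oneline size_map size_enum_ord.
Qed.

Lemma oneline_surj n w : perm_eq w (iota 0 n) -> exists s : 'S_n, oneline s = w.
Proof.
move=> P.
have Hu : uniq w by rewrite (perm_uniq P) iota_uniq.
have Hsz : size w = n by rewrite (perm_size P) size_iota.
have Hlt : forall i : 'I_n, nth 0 w i < n.
  move=> i; have : nth 0 w i \in w by apply: mem_nth; rewrite Hsz ltn_ord.
  by rewrite (perm_mem P) mem_iota.
pose f := fun i : 'I_n => Ordinal (Hlt i).
have finj : injective f.
  move=> i j /(congr1 val) /= /eqP; rewrite nth_uniq ?Hsz ?ltn_ord // => /eqP E.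
  exact: val_inj.
exists (perm finj).
rewrite /oneline (eq_map (g := fun i : 'I_n => nth 0 w (val i))); last first.
  by move=> i; rewrite permE.
rewrite (map_comp (nth 0 w) val) val_enum_ord -Hsz; exact: mkseq_nth.
Qed.

Lemma sum_Av n (F : seq nat -> {poly int}) :
  (\sum_(s in Av123_132 n) F (oneline s) = \sum_(w <- W n) F w)%R.
Proof.
rewrite -big_enum /= -(big_map (@oneline n) xpredT F).
apply: perm_big; apply: uniq_perm.
- by rewrite map_inj_uniq ?enum_uniq //; apply: oneline_inj.
- exact: W_uniq.
move=> w; apply/mapP/idP.
  move=> [s sin ->]; move: sin; rewrite mem_enum inE => H.
  apply: W_complete; first exact: oneline_perm.
  by rewrite -contains_good // (perm_uniq (oneline_perm _ s)) iota_uniq.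
move=> win; have [s Es] := oneline_surj _ _ (W_perm _ _ win).
exists s => //; rewrite mem_enum inE contains_good Es ?W_good //.
  exact: W_good win.
by rewrite (perm_uniq (W_perm _ _ win)) iota_uniq.
Qed.
Local Open Scope ring_scope.

Lemma gf_W st n : gf_coef st n = \sum_(w <- W n) 'X ^+ (st w).
Proof. exact: (sum_Av n (fun w => 'X ^+ st w)). Qed.

Lemma gf_S (st : seq nat -> nat) (f : nat -> seq nat -> nat) n :
  (forall a k s, all (fun y => (y < a)%N) s -> st (rev (iota a k) ++ (a + k)%N :: s) = f k s) ->
  gf_coef st n.+1 = \sum_(k < n.+1) \sum_(s <- W (n - k)) 'X ^+ (f k s).
Proof.
move=> H; rewrite gf_W sum_WS; apply: eq_bigr => k _.
apply: eq_big_seq => s sin.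
have kn : (k <= n)%N by rewrite -ltnS ltn_ord.
by have := H (n - k)%N k s (W_all _ _ sin); rewrite subnK // => ->.
Qed.

Lemma sum_rev (F : nat -> {poly int}) n : \sum_(i < n) F (n - i.+1)%N = \sum_(i < n) F i.
Proof. by rewrite -(big_mkord xpredT F) big_rev_mkord subn0. Qed.

Definition A st n := gf_coef st n.

Lemma ascS (st : seq nat -> nat) :
  (forall a k s, all (fun y => (y < a)%N) s ->
     st (rev (iota a k) ++ (a + k)%N :: s) = ((0 < k)%N + st s)%N) ->
  forall n, A st n.+1 = A st n + 'X * \sum_(j < n) A st j.
Proof.
move=> H n; rewrite /A (gf_S _ _ _ H) big_ord_recl /= subn0.
under eq_big_seq => s _ do rewrite add0n.
rewrite -gf_W; congr (_ + _).
rewrite -(sum_rev (A st)) big_distrr /=; apply: eq_bigr => i _.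
by under eq_big_seq => s _ do rewrite exprD expr1; rewrite -big_distrr -gf_W.
Qed.

Lemma coef4 (c0 c1 c2 c3 : {poly int}) k :
  (c0%:P + c1%:P * 'X + c2%:P * 'X ^+ 2 + c3%:P * 'X ^+ 3)`_k = nth 0 [:: c0; c1; c2; c3] k.
Proof.
rewrite !coefD !coefCM coefC coefX !coefXn.
by case: k => [|[|[|[|k]]]] /=; rewrite ?mulr0 ?mulr1 ?addr0 ?add0r ?nth_nil.
Qed.

Lemma fps4 (a : nat -> {poly int}) (N D : {poly {poly int}}) (d0 d1 d2 d3 n0 n1 n2 n3 : {poly int}) :
  D = d0%:P + d1%:P * 'X + d2%:P * 'X ^+ 2 + d3%:P * 'X ^+ 3 ->
  N = n0%:P + n1%:P * 'X + n2%:P * 'X ^+ 2 + n3%:P * 'X ^+ 3 ->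
  d0 = 1 ->
  d0 * a 0 = n0 ->
  d0 * a 1 + d1 * a 0 = n1 ->
  d0 * a 2 + d1 * a 1 + d2 * a 0 = n2 ->
  (forall m, d0 * a m.+3 + d1 * a m.+2 + d2 * a m.+1 + d3 * a m = if m == 0%N then n3 else 0) ->
  fps_is_ratio a N D.
Proof.
move=> -> -> H0 E0 E1 E2 E3; split; first by rewrite coef4.
case=> [|[|[|m]]].
- by rewrite big_ord1 !coef4.
- by rewrite !big_ord_recl big_ord0 !coef4 /= addr0.
- by rewrite !big_ord_recl big_ord0 !coef4 /= addr0 addrA.
rewrite !big_ord_recl big1; last by move=> i _; rewrite coef4 /= ?nth_nil mul0r.
rewrite !coef4 /= addr0 /bump /= !subn0 !subSS !subn0 !addrA E3.
by case: m => [|m] /=; rewrite ?nth_nil.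
Qed.

Lemma sum_split (st : seq nat -> nat) (g : nat -> nat) (h : seq nat -> nat) n :
  (forall a k s, all (fun y => (y < a)%N) s ->
     st (rev (iota a k) ++ (a + k)%N :: s) = (g k + h s)%N) ->
  A st n.+1 = \sum_(k < n.+1) 'X ^+ (g k) * \sum_(s <- W (n - k)) 'X ^+ (h s).
Proof.
move=> H; rewrite /A (gf_S _ _ _ H); apply: eq_bigr => k _.
by rewrite big_distrr; apply: eq_bigr => s _; rewrite exprD.
Qed.

Lemma A0 st : st [::] = 0%N -> A st 0 = 1.
Proof. by move=> H; rewrite /A gf_W W0 big_cons big_nil H expr0 addr0. Qed.

Lemma asc_nil : asc [::] = 0%N. Proof. by rewrite asc_bits. Qed.
Lemma des_nil : des [::] = 0%N. Proof. by rewrite des_bits. Qed.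
Lemma MNA_nil : MNA [::] = 0%N. Proof. by rewrite MNA_bits. Qed.
Lemma MND_nil : MND [::] = 0%N. Proof. by rewrite MND_bits. Qed.

Lemma ascD (st : seq nat -> nat) :
  (forall a k s, all (fun y => (y < a)%N) s ->
     st (rev (iota a k) ++ (a + k)%N :: s) = ((0 < k)%N + st s)%N) ->
  st [::] = 0%N ->
  fps_is_ratio (A st) (1%:P + (-1)%:P * 'X + 0%:P * 'X ^+ 2 + 0%:P * 'X ^+ 3)
                      (1%:P + (-2%:R)%:P * 'X + (1 - 'X)%:P * 'X ^+ 2 + 0%:P * 'X ^+ 3).
Proof.
move=> H H0.
have R := ascS _ H.
have a0 := A0 _ H0.
have a1 : A st 1 = 1 by rewrite R big_ord0 mulr0 addr0 a0.
have a2 : A st 2 = 1 + 'X by rewrite R big_ord1 a1 a0 mulr1.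
apply: fps4 => //.
- by rewrite a0 mulr1.
- by rewrite a1 a0; ring.
- by rewrite a2 a1 a0; ring.
move=> m.
have E3 := R m.+2; have E2 := R m.+1.
rewrite big_ord_recr /= in E3.
rewrite E3 E2 if_same; ring.
Qed.

Lemma E_eq (st : seq nat -> nat) j : st [::] = 0%N ->
  \sum_(s <- W j) 'X ^+ ((s != [::]) + st s)%N = if j is j'.+1 then 'X * A st j else 1.
Proof.
move=> H0; case: j => [|j].
  by rewrite W0 big_cons big_nil H0 expr0 addr0.
rewrite /A gf_W big_distrr; apply: eq_big_seq => s sin.
have : size s = j.+1 by apply: W_size.
by case: s {sin} => // x s _; rewrite exprD expr1.
Qed.

Definition Edes (j : nat) : {poly int} := \sum_(s <- W j) 'X ^+ ((s != [::]) + des s)%N.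

Lemma desD :
  fps_is_ratio (A des) (1%:P + (1 - 2%:R * 'X)%:P * 'X + (1 - 2%:R * 'X + 'X ^+ 2)%:P * 'X ^+ 2 + 0%:P * 'X ^+ 3)
                      (1%:P + (- (2%:R * 'X))%:P * 'X + ('X ^+ 2 - 'X)%:P * 'X ^+ 2 + 0%:P * 'X ^+ 3).
Proof.
pose E := Edes.
have HE (j : nat) : E j = if j is j'.+1 then 'X * A des j else 1 by apply: E_eq; exact: des_nil.
have R (n : nat) : A des n.+1 = \sum_(k < n.+1) 'X ^+ k.-1 * E (n - k)%N.
  by apply: sum_split => a k s Hs; rewrite des_blk // addnA.
clearbody E.
have R2 (n : nat) : A des n.+2 = 'X * A des n.+1 + E n.+1 + E n - 'X * E n.
  rewrite (R n.+1) (R n) big_distrr !big_ord_recl /= !subn0.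
  have -> : \sum_(i < n) 'X ^+ (0 + bump 0 i)%N * E (n.+1 - bump 0 (bump 0 i))%N =
            \sum_(i < n) 'X * ('X ^+ (0 + i)%N * E (n - bump 0 i)%N).
    by apply: eq_bigr => i _; rewrite /bump !add1n !add0n subSS exprS mulrA.
  rewrite /bump /= subSS subn0 !expr0 !mul1r; ring.
have a0 : A des 0 = 1 by apply: A0; exact: des_nil.
have a1 : A des 1 = 1 by rewrite R big_ord1 /= HE expr0 mul1r.
have a2 : A des 2 = 1 + 'X by rewrite R2 a1 !HE a1; ring.
apply: fps4 => //.
- by rewrite a0 mulr1.
- by rewrite a1 a0; ring.
- by rewrite a2 a1 a0; ring.
move=> m.
rewrite if_same (R2 m.+1) !HE; ring.
Qed.

Definition Rr (j : nat) : {poly int} := \sum_(s <- W j) 'X ^+ (rst s).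
Arguments Rr : simpl never.
Arguments A : simpl never.

Lemma Rr_eq j : Rr j = if j is _.+1 then A qst j else 1.
Proof.
case: j => [|j]; first by rewrite /Rr W0 big_cons big_nil /= expr0 addr0.
rewrite /Rr /A gf_W; apply: eq_big_seq => s sin.
have : size s = j.+1 by apply: W_size.
by case: s {sin} => // x s _; rewrite rst_cons.
Qed.

Lemma UR n : A MND n.+1 = \sum_(k < n.+1) 'X ^+ k./2 * Rr (n - k)%N.
Proof. by apply: sum_split => a k s Hs; rewrite MND_blk. Qed.

Lemma QR n : A qst n.+1 = 'X * A MND n + \sum_(i < n) 'X ^+ (uphalf i.+1) * Rr (n - i.+1)%N.
Proof.
rewrite /A (gf_S _ (fun k s => if k == 0%N then (MND s).+1 else (uphalf k + rst s)%N)); last first.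
  by move=> a k s Hs; rewrite qst_blk.
rewrite big_ord_recl /= subn0 (gf_W MND n) big_distrr; congr (_ + _).
  by apply: eq_bigr => s _; rewrite exprS.
apply: eq_bigr => i _; rewrite big_distrr; apply: eq_bigr => s _.
by rewrite /bump /= exprD.
Qed.

Lemma QR2 n : A qst n.+2 = 2%:R * 'X * A MND n.+1.
Proof.
rewrite QR (UR n) big_distrr.
have -> : \sum_(i < n.+1) 'X ^+ (uphalf i.+1) * Rr (n.+1 - i.+1)%N =
          \sum_(i < n.+1) 'X * ('X ^+ i./2 * Rr (n - i)%N).
  by apply: eq_bigr => i _; rewrite subSS /= exprS mulrA.
rewrite -big_distrr -UR; rewrite -[LHS]/('X * A MND n.+1 + 'X * A MND n.+1); ring.
Qed.

Lemma UR3 n : A MND n.+3 = Rr n.+2 + Rr n.+1 + 'X * A MND n.+1.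
Proof.
rewrite (UR n.+2) (UR n) big_distrr.
rewrite big_ord_recl big_ord_recl addrA; congr (_ + _ + _).
- by rewrite subn0 expr0 mul1r.
- by rewrite /bump /= subSS subn0 expr0 mul1r.
apply: eq_bigr => i _; rewrite /= add0n exprS -mulrA.
have -> : (n.+2 - bump 0 (bump 0 i) = n - i)%N by rewrite /bump !leq0n !add1n subSS subSS.
by [].
Qed.

Lemma MNDD :
  fps_is_ratio (A MND) (1%:P + 1%:P * 'X + (1 - 2%:R * 'X)%:P * 'X ^+ 2 + (- 'X)%:P * 'X ^+ 3)
                       (1%:P + 0%:P * 'X + (- (3%:R * 'X))%:P * 'X ^+ 2 + (- (2%:R * 'X))%:P * 'X ^+ 3).
Proof.
have a0 : A MND 0 = 1 by apply: A0; exact: MND_nil.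
have r0 : Rr 0 = 1 by rewrite Rr_eq.
have q1 : A qst 1 = 'X by rewrite QR big_ord0 a0 mulr1 addr0.
have a1 : A MND 1 = 1 by rewrite UR big_ord1 /= expr0 mul1r r0.
have a2 : A MND 2 = 1 + 'X.
  by rewrite UR !big_ord_recl big_ord0 /= Rr_eq r0 q1 /bump /= expr0 !mul1r addr0 addrC.
have a3 : A MND 3 = 4%:R * 'X.
  by rewrite UR3 !Rr_eq QR2 q1 a1; ring.
apply: fps4 => //.
- by rewrite a0 mulr1.
- by rewrite a1 a0; ring.
- by rewrite a2 a0; ring.
case=> [|m] /=.
  by rewrite a3 a1 a0; ring.
rewrite (UR3 m.+1) !Rr_eq !QR2; ring.
Qed.

Lemma fps_eq (a : nat -> {poly int}) N D N' D' :
  fps_is_ratio a N D -> N = N' -> D = D' -> fps_is_ratio a N' D'.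
Proof. by move=> H <- <-. Qed.

Theorem corollary1 :
  let t : {poly {poly int}} := ('X : {poly int})%:P in
  let x : {poly {poly int}} := 'X in
  [/\ fps_is_ratio (gf_coef asc) (1 - x) (1 - 2%:R * x + x ^+ 2 - t * x ^+ 2),
      fps_is_ratio (gf_coef des)
        (1 + x - 2%:R * t * x + x ^+ 2 - 2%:R * t * x ^+ 2 + t ^+ 2 * x ^+ 2)
        (1 - 2%:R * t * x - t * x ^+ 2 + t ^+ 2 * x ^+ 2),
      fps_is_ratio (gf_coef MNA) (1 - x) (1 - 2%:R * x + x ^+ 2 - x ^+ 2 * t)
    & fps_is_ratio (gf_coef MND)
        (1 + x + x ^+ 2 - 2%:R * x ^+ 2 * t - x ^+ 3 * t)
        (1 - 3%:R * x ^+ 2 * t - 2%:R * x ^+ 3 * t)].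
Proof.
move=> t x; rewrite /t /x; split.
- have H := ascD asc asc_blk asc_nil.
  rewrite /A in H. apply: (fps_eq _ _ _ _ _ H);
    rewrite ?(rmorphB, rmorphN, rmorphD, rmorphM, rmorph1, rmorph0, rmorph_nat, rmorphXn) /=; ring.
- apply: (fps_eq _ _ _ _ _ desD);
    rewrite ?(rmorphB, rmorphN, rmorphD, rmorphM, rmorph1, rmorph0, rmorph_nat, rmorphXn) /=; ring.
- apply: (fps_eq _ _ _ _ _ (ascD MNA MNA_blk MNA_nil));
    rewrite ?(rmorphB, rmorphN, rmorphD, rmorphM, rmorph1, rmorph0, rmorph_nat, rmorphXn) /=; ring.
- apply: (fps_eq _ _ _ _ _ MNDD);
    rewrite ?(rmorphB, rmorphN, rmorphD, rmorphM, rmorph1, rmorph0, rmorph_nat, rmorphXn) /=; ring.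
Qed.
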